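(* Let $\sigma\in S_t$ and $p\in S_k$, and let $m=\min(t-1,k)$. If $\mathrm{red}(p_1\cdots p_m)\neq\mathrm{red}(\sigma_1\cdots\sigma_m)$, then the set $\{1\}$ is reversibly deletable for $p$ with respect to $\{(\sigma,[t-2])\}$ (the vincular pattern $\sigma_1\sigma_2\cdots\sigma_{t-1}\text{-}\sigma_t$).
   Context: $\mathrm{red}(w)$ replaces the $i$-th smallest letter of a word of distinct integers by $i$. A vincular pattern of length $\ell$ is $(\sigma,X)$ with $\sigma\in S_\ell$, $X\subseteq[\ell-1]$; $\pi\in S_n$ contains it if there are $i_1<\dots<i_\ell$ with $\mathrm{red}(\pi_{i_1}\cdots\pi_{i_\ell})=\sigma$ and $i_{x+1}=i_x+1$ for all $x\in X$. For $p\in S_k$ and $w\in[n]^k$ with distinct letters and $\mathrm{red}(w)=p$, $S_n^B(p;w)$ is the set of $B$-avoiding $\pi\in S_n$ with $\pi_i=w_i$ for $i\le k$. $d_R(\pi)$ deletes the entries in positions in $R$ and reduces; for words $d_R(w)$ deletes $w_r$ ($r\in R$) and subtracts from each remaining $w_i$ the number of $r\in R$ with $w_r<w_i$. $R\subseteq[k]$ is reversibly deletable for $p$ w.r.t. $B$ if for every $n$ and every such $w$ with $S_n^B(p;w)\ne\emptyset$, $d_R$ restricts to a bijection $S_n^B(p;w)\to S_{n-|R|}^B(d_R(p);d_R(w))$. *)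

(* Defs.v *)
(* Permutations / words are seq nat with values 1-indexed;
   positions in the paper are 1-indexed, list indices are 0-indexed. *)
From mathcomp Require Import all_boot.
Set Implicit Arguments. Unset Strict Implicit. Unset Printing Implicit Defensive.

(* red(w): replace the i-th smallest letter by i (w has distinct letters). *)
Definition red (w : seq nat) : seq nat :=
  [seq (count (fun y => y < x) w).+1 | x <- w].

Definition is_perm (n : nat) (pi : seq nat) : bool := perm_eq pi (iota 1 n).

(* A vincular pattern (sigma, X) with X a list of elements of [l-1]. *)
Definition vpattern := (seq nat * seq nat)%type.

(* pi contains (sigma, X): there are (0-indexed) positions
   idx = [i_1 < ... < i_l] in pi with red(pi_{i_1}...pi_{i_l}) = sigma and
   i_{x+1} = i_x + 1 for x in X (x is 1-indexed: i_x = nth idx (x-1)). *)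
Definition contains (pi : seq nat) (P : vpattern) : Prop :=
  exists idx : seq nat,
    [/\ size idx = size P.1, sorted ltn idx, all (fun i => i < size pi) idx,
        red [seq nth 0 pi i | i <- idx] = P.1
      & all (fun x => nth 0 idx x == (nth 0 idx x.-1).+1) P.2].

Definition avoids (B : seq vpattern) (pi : seq nat) : Prop :=
  forall P, P \in B -> ~ contains pi P.

Definition is_word (n k : nat) (w : seq nat) : bool :=
  [&& size w == k, uniq w & all (fun x => 0 < x <= n) w].

(* pi in S_n^B(p; w) : B-avoiding pi in S_n with pi_i = w_i for i <= |w|
   (the set is considered for red(w) = p). *)
Definition SB (n : nat) (B : seq vpattern) (p w : seq nat) (pi : seq nat) : Prop :=
  [/\ red w = p, is_perm n pi, avoids B pi & take (size w) pi = w].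

(* entries of s at the (1-indexed) positions not in R *)
Definition keep (R : seq nat) (s : seq nat) : seq nat :=
  [seq nth 0 s i.-1 | i <- iota 1 (size s) & i \notin R].

Definition dR_perm (R : seq nat) (pi : seq nat) : seq nat := red (keep R pi).

Definition dR_word (R : seq nat) (w : seq nat) : seq nat :=
  [seq x - count (fun r => nth 0 w r.-1 < x) R | x <- keep R w].

Definition rev_deletable (B : seq vpattern) (p : seq nat) (R : seq nat) : Prop :=
  uniq R /\ all (fun r => 0 < r <= size p) R /\
  forall (n : nat) (w : seq nat),
    is_word n (size p) w -> red w = p ->
    (exists pi, SB n B p w pi) ->
    [/\ (forall pi, SB n B p w pi ->
           SB (n - size R) B (dR_perm R p) (dR_word R w) (dR_perm R pi)),
        (forall pi1 pi2, SB n B p w pi1 -> SB n B p w pi2 ->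
           dR_perm R pi1 = dR_perm R pi2 -> pi1 = pi2)
      & (forall pi', SB (n - size R) B (dR_perm R p) (dR_word R w) pi' ->
           exists2 pi, SB n B p w pi & dR_perm R pi = pi')].

(* Main.v *)
Require Import Defs.
From mathcomp Require Import all_boot.
From mathcomp Require Import zify.
Set Implicit Arguments. Unset Strict Implicit. Unset Printing Implicit Defensive.

Definition cnt (s : seq nat) (x : nat) := count (fun y => y < x) s.

Lemma redE s : red s = map (fun x => (cnt s x).+1) s.
Proof. by []. Qed.

Lemma cnt_lt (s : seq nat) (x y : nat) : x \in s -> x < y -> cnt s x < cnt s y.
Proof.
move=> xs xy; rewrite /cnt.
have H1 := count_predUI (fun z => z < x) (pred1 x) s.
have H2 : count (predI (fun z => z < x) (pred1 x)) s = 0.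
  apply/eqP; rewrite eqn0Ngt -has_count; apply/hasPn => z _ /=.
  by apply/negP => /andP [zx /eqP zx']; rewrite zx' ltnn in zx.
have H3 : 0 < count (pred1 x) s by rewrite -has_count has_pred1.
have H4 : count (predU (fun z => z < x) (pred1 x)) s <= count (fun z => z < y) s.
  apply: sub_count => z /= /orP [zx | /eqP ->] //; exact: ltn_trans zx xy.
rewrite H2 addn0 in H1; rewrite H1 in H4; apply: leq_trans H4.
by rewrite -[X in X < _]addn0 ltn_add2l.
Qed.

Lemma g_mono (s : seq nat) (x y : nat) : x \in s -> y \in s -> ((cnt s y).+1 < (cnt s x).+1) = (y < x).
Proof.
move=> xs ys; rewrite ltnS; case: (ltngtP y x) => [yx|xy|->].
- exact: cnt_lt.
- by apply/negbTE; rewrite -leqNgt ltnW // cnt_lt.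
- by rewrite ltnn.
Qed.

Lemma red_map f s : {in s &, forall x y, (f y < f x) = (y < x)} -> red (map f s) = red s.
Proof.
move=> H; rewrite /red -map_comp; apply/eq_in_map => x xs /=; congr S.
rewrite count_map; apply: eq_in_count => y ys /=; exact: H.
Qed.

Lemma red_sub s s' : {subset s' <= s} -> red (map (fun x => (cnt s x).+1) s') = red s'.
Proof. move=> sub; apply: red_map => x y xs ys; exact: g_mono (sub _ xs) (sub _ ys). Qed.

Lemma red_take m s : red (take m (red s)) = red (take m s).
Proof. by rewrite [red s]redE -map_take red_sub // => x; apply: mem_take. Qed.

Lemma red_behead s : red (behead (red s)) = red (behead s).
Proof. by rewrite [red s]redE behead_map red_sub // => x; apply: mem_behead. Qed.

Lemma red_perm s : uniq s -> perm_eq (red s) (iota 1 (size s)).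
Proof.
move=> us.
have ur : uniq (red s).
  rewrite redE map_inj_in_uniq // => x y xs ys gxy.
  case: (ltngtP x y) => [xy|yx|] //.
    by have := cnt_lt xs xy; lia.
  by have := cnt_lt ys yx; lia.
have sub : {subset red s <= iota 1 (size s)}.
  move=> z /mapP [x xs ->]; rewrite mem_iota /=.
  have := count_predC (fun y => y < x) s.
  have : 0 < count (predC (fun y => y < x)) s.
    by rewrite -has_count; apply/hasP; exists x => //=; rewrite ltnn.
  rewrite /cnt; lia.
have hs : size (iota 1 (size s)) <= size (red s) by rewrite size_map size_iota.
have [_ eqi] := uniq_min_size ur sub hs.
exact: uniq_perm ur (iota_uniq _ _) eqi.
Qed.

Lemma cnt_iota a n x : count (fun y => y < x) (iota a n) = minn (x - a) n.
Proof.
elim: n a => [|n IH] a /=; first lia.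
rewrite IH; case: (ltnP a x) => h /=; lia.
Qed.

Definition fw (w0 x : nat) := x - (w0 < x).
Definition lw (w0 y : nat) := y + (w0 <= y).

Lemma lift_f w0 x : x != w0 -> lw w0 (fw w0 x) = x.
Proof. rewrite /lw /fw; case: (ltngtP w0 x) => h //= _; case: leqP => h2 /=; lia. Qed.

Lemma f_lift w0 y : fw w0 (lw w0 y) = y.
Proof. rewrite /lw /fw; case: (leqP w0 y) => h /=; case: ltnP => h2 /=; lia. Qed.

Lemma lw_inj w0 : injective (lw w0).
Proof. exact: can_inj (@f_lift w0). Qed.

Lemma lw_neq w0 y : lw w0 y != w0.
Proof. rewrite /lw; case: (leqP w0 y) => h /=; lia. Qed.

Lemma red_tail w0 s n : perm_eq (w0 :: s) (iota 1 n) -> red s = map (fw w0) s.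
Proof.
move=> P; rewrite redE; apply/eq_in_map => x xs.
have xin : x \in iota 1 n by rewrite -(perm_mem P) inE xs orbT.
have w0in : w0 \in iota 1 n by rewrite -(perm_mem P) inE eqxx.
move: xin w0in; rewrite !mem_iota => /andP[x1 xn] /andP[w1 wn].
have /permP /(_ (fun y => y < x)) := P.
rewrite cnt_iota /= /cnt /fw; case: (ltnP w0 x) => h /=; lia.
Qed.

Lemma keep1 s : keep [::1] s = behead s.
Proof.
case: s => [|a s] //=; rewrite /keep /=.
rewrite (@eq_in_filter _ _ predT); last first.
  by move=> i; rewrite mem_iota inE => /andP[h _]; case: eqP h => // ->.
rewrite filter_predT.
apply: (@eq_from_nth _ 0); first by rewrite size_map size_iota.
move=> i; rewrite size_map size_iota => hi.
by rewrite (nth_map 0) ?size_iota // nth_iota.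
Qed.

Lemma dRw w : dR_word [::1] w = map (fw (head 0 w)) (behead w).
Proof. rewrite /dR_word keep1; apply: eq_map => x /=; by rewrite addn0 nth0. Qed.

Definition occ (pi : seq nat) (P : vpattern) (idx : seq nat) :=
    [/\ size idx = size P.1, sorted ltn idx, all (fun i => i < size pi) idx,
        red [seq nth 0 pi i | i <- idx] = P.1
      & all (fun x => nth 0 idx x == (nth 0 idx x.-1).+1) P.2].

Lemma nthS (s : seq nat) i : nth 0 (map S s) i = if i < size s then (nth 0 s i).+1 else 0.
Proof. case: ltnP => h; first by rewrite (nth_map 0). by rewrite nth_default // size_map. Qed.

Lemma adjS (s : seq nat) x :
  (nth 0 (map S s) x == (nth 0 (map S s) x.-1).+1) = (nth 0 s x == (nth 0 s x.-1).+1).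
Proof.
rewrite !nthS; case: (ltnP x (size s)) => h.
  have -> : x.-1 < size s by lia.
  by rewrite eqSS.
by rewrite (nth_default 0 h).
Qed.

Lemma occ_shift a s P idx0 : occ (a :: s) P (map S idx0) <-> occ (red s) P idx0.
Proof.
have E1 : sorted ltn (map S idx0) = sorted ltn idx0 by rewrite sorted_map.
have E2 : all (fun i => i < size (a :: s)) (map S idx0) = all (fun i => i < size (red s)) idx0.
  by rewrite all_map size_map; apply: eq_all => i /=.
have E3 : all (fun i => i < size s) idx0 ->
   red [seq nth 0 (a :: s) i | i <- map S idx0] = red [seq nth 0 (red s) i | i <- idx0].
  move=> /allP hall.
  have -> : [seq nth 0 (a :: s) i | i <- map S idx0] = [seq nth 0 s i | i <- idx0].
    by rewrite -map_comp.
  have -> : [seq nth 0 (red s) i | i <- idx0] =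
     map (fun x => (cnt s x).+1) [seq nth 0 s i | i <- idx0].
    rewrite -map_comp; apply/eq_in_map => i ii /=.
    by rewrite redE (nth_map 0) //; apply: hall.
  rewrite red_sub // => z /mapP [i ii ->]; apply: mem_nth; exact: hall.
have E4 : all (fun x => nth 0 (map S idx0) x == (nth 0 (map S idx0) x.-1).+1) P.2 =
          all (fun x => nth 0 idx0 x == (nth 0 idx0 x.-1).+1) P.2.
  by apply: eq_all => x; rewrite adjS.
rewrite /occ size_map E1 E2 E4.
have Es : size (red s) = size s by rewrite size_map.
split; case=> h1 h2 h3 h4 h5; split => //.
  by rewrite -E3 // -Es.
by rewrite E3 // -Es.
Qed.

Lemma no_head0 t k (sigma p w pi idx : seq nat) :
  size sigma = t -> red w = p -> size w = k -> take k pi = w ->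
  occ pi (sigma, iota 1 (t - 2)) idx -> nth 0 idx 0 = 0 ->
  red (take (minn (t-1) k) p) = red (take (minn (t-1) k) sigma).
Proof.
move=> St Rw Sw Tk [h1 h2 h3 h4 h5] h0 /=.
rewrite /= in h1 h4 h5.
set m := minn (t-1) k.
have Hj : forall j, j <= t - 2 -> nth 0 idx j = j.
  elim=> [|j IH] hj //.
  have := allP h5 j.+1; rewrite mem_iota.
  have -> : 1 <= j.+1 < 1 + (t - 2) by lia.
  by move=> /(_ isT) /eqP ->; rewrite /= IH //; lia.
have kpi : k <= size pi.
  by move: (congr1 size Tk); rewrite size_take_min Sw; lia.
set o := [seq nth 0 pi i | i <- idx].
have To : take m o = take m pi.
  apply: (@eq_from_nth _ 0).
    rewrite !size_take_min size_map h1; lia.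
  move=> j; rewrite size_take_min size_map h1 => hj.
  have jm : j < m by lia.
  rewrite !nth_take // (nth_map 0); last by lia.
  by rewrite Hj //; lia.
rewrite -h4 red_take To -Rw red_take -Tk take_takel //; lia.
Qed.

Lemma ce t k (sigma p w : seq nat) a s :
  is_perm t sigma -> red w = p -> size w = k -> take k (a :: s) = w ->
  red (take (minn (t-1) k) p) != red (take (minn (t-1) k) sigma) ->
  contains (a :: s) (sigma, iota 1 (t - 2)) <-> contains (red s) (sigma, iota 1 (t - 2)).
Proof.
move=> Ps Rw Sw Tk Hneq; have St : size sigma = t by rewrite (perm_size Ps) size_iota.
split.
  move=> [idx O].
  have O' : occ (a :: s) (sigma, iota 1 (t - 2)) idx := O.
  have nz : nth 0 idx 0 != 0.
    apply/negP => /eqP z; move/negP: Hneq; apply; apply/eqP.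
    exact: no_head0 St Rw Sw Tk O' z.
  case: O => h1 h2 h3 h4 h5.
  have pos : all (fun i => 0 < i) idx.
    move: h2 nz; case: idx {h1 h3 h4 h5 O'} => [|i0 r] //= h2 nz.
    rewrite lt0n nz /=; apply/allP => z zr.
    have := allP (order_path_min ltn_trans h2) z zr; rewrite /=; lia.
  have Eidx : map S (map predn idx) = idx.
    rewrite -map_comp; apply: map_id_in => z zi /=.
    by rewrite prednK //; apply: (allP pos).
  exists (map predn idx); apply/(occ_shift a); rewrite Eidx; exact: O'.
move=> [idx0 O]; exists (map S idx0); apply/(occ_shift a); exact: O.
Qed.

Lemma avoids1 Q x : avoids [:: Q] x <-> ~ contains x Q.
Proof.
split; first by move=> H; apply: H; rewrite inE.
by move=> H P; rewrite inE => /eqP ->.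
Qed.

Lemma fw_mono w0 (s : seq nat) : w0 \notin s ->
  {in s &, forall x y, (fw w0 y < fw w0 x) = (y < x)}.
Proof.
move=> nw x y xs ys.
have hx : x != w0 by apply/eqP => e; rewrite -e xs in nw.
have hy : y != w0 by apply/eqP => e; rewrite -e ys in nw.
rewrite /fw; case: (ltnP w0 x) => h1; case: (ltnP w0 y) => h2 /=;
  apply/idP/idP; lia.
Qed.

Lemma lw_fw_map w0 (s : seq nat) : w0 \notin s -> map (lw w0) (map (fw w0) s) = s.
Proof.
move=> nw; rewrite -map_comp; apply: map_id_in => x xs /=; apply: lift_f.
by apply/eqP => e; rewrite -e xs in nw.
Qed.

Theorem mainTheorem5 (t k : nat) (sigma p : seq nat) :
  is_perm t sigma -> is_perm k p ->
  red (take (minn (t - 1) k) p) != red (take (minn (t - 1) k) sigma) ->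
  rev_deletable [:: (sigma, iota 1 (t - 2))] p [:: 1].
Proof.
move=> Ps Pp Hneq.
have Sp : size p = k by rewrite (perm_size Pp) size_iota.
have m1 : 0 < minn (t - 1) k.
  case: (posnP (minn (t - 1) k)) => // m0; by rewrite m0 !take0 eqxx in Hneq.
split => //; split; first by rewrite /= Sp andbT; lia.
move=> n w Hw Rw _.
move: Hw => /and3P [/eqP Sw uw aw].
case: w Sw uw aw Rw => [|w0 ws] Sw uw aw Rw; first by rewrite /= Sp in Sw; lia.
move: uw => /= /andP [nw uws].
have w0n : 0 < w0 <= n by move: aw => /= /andP [].
have Hk : size (w0 :: ws) = k by rewrite Sw.
have CE : forall a s, take k (a :: s) = w0 :: ws ->
   contains (a :: s) (sigma, iota 1 (t - 2)) <-> contains (red s) (sigma, iota 1 (t - 2)).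
  by move=> a s Tk; exact: ce Ps Rw Hk Tk Hneq.
have keepE : forall s, dR_perm [:: 1] s = red (behead s) by move=> s; rewrite /dR_perm keep1.
have dRwE : dR_word [:: 1] (w0 :: ws) = map (fw w0) ws by rewrite dRw.
have Struct : forall pi, SB n [:: (sigma, iota 1 (t - 2))] p (w0 :: ws) pi ->
   exists s, [/\ pi = w0 :: s, take (size ws) s = ws, perm_eq (w0 :: s) (iota 1 n)
      & ~ contains (red s) (sigma, iota 1 (t - 2))].
  move=> [|a s] [_ Pi Av Tk]; first by [].
  move: (Tk) => /= [ea Tk']; subst a; exists s; split => //.
  have T0 : take k (w0 :: s) = w0 :: ws by rewrite -Hk /= Tk'.
  move=> C; move/avoids1: Av; apply; exact/(CE w0 s T0).
have RedE : red (dR_word [:: 1] (w0 :: ws)) = dR_perm [:: 1] p.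
  rewrite dRwE keepE -Rw red_behead /= red_map //; exact: fw_mono.
split.
- move=> pi /Struct [s [-> Ts Ps' Av]]; split; first exact: RedE.
  + rewrite keepE /= /is_perm; have us : uniq s.
      by have := perm_uniq Ps'; rewrite iota_uniq => /= /andP [].
    have e : size s = n - 1 by rewrite -(size_iota 1 n) -(perm_size Ps') /=; lia.
    by rewrite -e; exact: red_perm.
  + rewrite keepE /=; exact/avoids1.
  + by rewrite keepE dRwE size_map /= (red_tail Ps') -map_take Ts.
- move=> pi1 pi2 /Struct [s1 [-> _ P1 _]] /Struct [s2 [-> _ P2 _]].
  rewrite !keepE /= (red_tail P1) (red_tail P2) => E.
  have n1 : w0 \notin s1 by have := perm_uniq P1; rewrite iota_uniq => /= /andP [].
  have n2 : w0 \notin s2 by have := perm_uniq P2; rewrite iota_uniq => /= /andP [].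
  by rewrite -(lw_fw_map n1) E lw_fw_map.
- move=> pi' [_ Pi' Av' Tk'].
  have up' : uniq pi' by rewrite (perm_uniq Pi') iota_uniq.
  have Sp' : size pi' = n - 1 by rewrite (perm_size Pi') size_iota.
  set pi := w0 :: map (lw w0) pi'.
  have Ppi : perm_eq pi (iota 1 n).
    have upi : uniq pi.
      rewrite /= map_inj_uniq ?up' ?andbT; last exact: lw_inj.
      apply/mapP => [[y _ e]]; move: (lw_neq w0 y); by rewrite -e eqxx.
    have sub : {subset pi <= iota 1 n}.
      move=> z; rewrite inE => /orP [/eqP -> | /mapP [y yi ->]].
        by rewrite mem_iota; lia.
      move: yi; rewrite (perm_mem Pi') !mem_iota /lw; case: leqP => /= h; lia.
    have hs : size (iota 1 n) <= size pi by rewrite /= size_map Sp' size_iota; lia.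
    have [_ eqi] := uniq_min_size upi sub hs.
    exact: uniq_perm upi (iota_uniq _ _) eqi.
  have Rpi : red (map (lw w0) pi') = pi'.
    rewrite (red_tail Ppi) -map_comp; apply: map_id_in => y _ /=; exact: f_lift.
  exists pi; last by rewrite keepE /= Rpi.
  split => //.
  + apply/avoids1; apply/(CE w0 (map (lw w0) pi')).
      rewrite -Hk /= -map_take; congr cons.
      move: Tk'; rewrite dRwE size_map => ->; exact: lw_fw_map.
    rewrite Rpi; exact/avoids1.
  + rewrite /= -map_take; congr cons.
    move: Tk'; rewrite dRwE size_map => ->; exact: lw_fw_map.
Qed.
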